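(* Let $\mathbf{L}$ be a Euclidean modal logic. If $\mathtt{Th}(\mathtt{Fr}(\mathbf{L}))$ is undecidable, then the problem of deciding, given a first-order sentence, whether it is modally definable in $\mathtt{Fr}(\mathbf{L})$ is undecidable.
   Context: A frame is a pair $(W,R)$ with $W$ non-empty and $R\subseteq W\times W$. Modal formulas (propositional variables, $\bot,\neg,\vee,\Box$) have standard Kripke semantics; validity in a frame means truth at all points under all valuations. A (normal) modal logic contains all tautologies and K axioms and is closed under uniform substitution, modus ponens and necessitation; a Euclidean modal logic is one not containing $\bot$ and containing $\Diamond\psi\to\Box\Diamond\psi$ for all $\psi$. $\mathtt{Fr}(\mathbf{L})$ is the class of frames validating $\mathbf{L}$; $\mathtt{Th}(\mathcal{C})$ is the set of first-order sentences (one binary relation symbol $\mathbf{R}$ and equality) valid in all frames of $\mathcal{C}$. A sentence $A$ is modally definable in a class $\mathcal{C}$ if there is a modal formula $\psi$ with $\mathcal{F}\models\psi\iff\mathcal{F}\models A$ for all $\mathcal{F}\in\mathcal{C}$. *)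

(* Defs.v *)
From Stdlib Require Import Arith List.
Import ListNotations.

Inductive mform : Type :=
| MVar : nat -> mform
| MBot : mform
| MNeg : mform -> mform
| MOr  : mform -> mform -> mform
| MBox : mform -> mform.

Definition MImp (a b : mform) : mform := MOr (MNeg a) b.
Definition MDia (a : mform) : mform := MNeg (MBox (MNeg a)).

Record frame : Type := Frame {
  fW : Type;
  fR : fW -> fW -> Prop;
  fW_inhabited : inhabited fW
}.

Fixpoint msat (F : frame) (V : nat -> fW F -> Prop) (w : fW F) (a : mform)
  : Prop :=
  match a with
  | MVar n => V n w
  | MBot => False
  | MNeg b => ~ msat F V w b
  | MOr b c => msat F V w b \/ msat F V w c
  | MBox b => forall u, fR F w u -> msat F V u b
  end.

Definition mvalid (F : frame) (a : mform) : Prop :=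
  forall (V : nat -> fW F -> Prop) (w : fW F), msat F V w a.

(* Boolean evaluation treating boxed subformulas as atoms: a formula is a
   (substitution instance of a) propositional tautology iff it evaluates to
   true for every assignment of truth values to variables and to boxed
   subformulas. *)
Fixpoint beval (v : nat -> bool) (b : mform -> bool) (a : mform) : bool :=
  match a with
  | MVar n => v n
  | MBot => false
  | MNeg c => negb (beval v b c)
  | MOr c d => orb (beval v b c) (beval v b d)
  | MBox c => b c
  end.

Definition tautology (a : mform) : Prop :=
  forall v b, beval v b a = true.

Fixpoint msubst (s : nat -> mform) (a : mform) : mform :=
  match a with
  | MVar n => s n
  | MBot => MBot
  | MNeg c => MNeg (msubst s c)
  | MOr c d => MOr (msubst s c) (msubst s d)
  | MBox c => MBox (msubst s c)
  end.

Definition normal_modal_logic (L : mform -> Prop) : Prop :=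
  (forall a, tautology a -> L a) /\
  (forall a b, L (MImp (MBox (MImp a b)) (MImp (MBox a) (MBox b)))) /\
  (forall s a, L a -> L (msubst s a)) /\
  (forall a b, L (MImp a b) -> L a -> L b) /\
  (forall a, L a -> L (MBox a)).

Definition euclidean_logic (L : mform -> Prop) : Prop :=
  normal_modal_logic L /\ ~ L MBot /\
  (forall a, L (MImp (MDia a) (MBox (MDia a)))).

Definition Fr (L : mform -> Prop) (F : frame) : Prop :=
  forall a, L a -> mvalid F a.

Inductive fo : Type :=
| FEq  : nat -> nat -> fo
| FRel : nat -> nat -> fo
| FBot : fo
| FImp : fo -> fo -> fo
| FAll : nat -> fo -> fo.

Fixpoint fsat (F : frame) (rho : nat -> fW F) (A : fo) : Prop :=
  match A with
  | FEq x y => rho x = rho y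
  | FRel x y => fR F (rho x) (rho y)
  | FBot => False
  | FImp B C => fsat F rho B -> fsat F rho C
  | FAll x B => forall d : fW F,
      fsat F (fun y => if Nat.eqb y x then d else rho y) B
  end.

Fixpoint fv (A : fo) : list nat :=
  match A with
  | FEq x y => [x; y]
  | FRel x y => [x; y]
  | FBot => []
  | FImp B C => fv B ++ fv C
  | FAll x B => filter (fun y => negb (Nat.eqb y x)) (fv B)
  end.

Definition sentence (A : fo) : Prop := fv A = [].

Definition fvalid (F : frame) (A : fo) : Prop :=
  forall rho : nat -> fW F, fsat F rho A.

Definition Th (C : frame -> Prop) (A : fo) : Prop :=
  sentence A /\ forall F, C F -> fvalid F A.

Definition modally_definable_in (C : frame -> Prop) (A : fo) : Prop :=
  exists psi : mform, forall F, C F -> (mvalid F psi <-> fvalid F A).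

Inductive rf : Type :=
| RZero : rf
| RSucc : rf
| RProj : nat -> rf
| RComp : rf -> list rf -> rf
| RPrim : rf -> rf -> rf
| RMin  : rf -> rf.

Inductive reval : rf -> list nat -> nat -> Prop :=
| ev_zero : forall v, reval RZero v 0
| ev_succ : forall x v, reval RSucc (x :: v) (S x)
| ev_proj : forall i v, i < length v -> reval (RProj i) v (nth i v 0)
| ev_comp : forall f gs v ws y,
    revals gs v ws -> reval f ws y -> reval (RComp f gs) v y
| ev_prim0 : forall f g v y, reval f v y -> reval (RPrim f g) (0 :: v) y
| ev_primS : forall f g n v y z,
    reval (RPrim f g) (n :: v) y -> reval g (n :: y :: v) z ->
    reval (RPrim f g) (S n :: v) z
| ev_min : forall f v n,
    reval f (n :: v) 0 ->
    (forall m, m < n -> exists k, reval f (m :: v) (S k)) ->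
    reval (RMin f) v n
with revals : list rf -> list nat -> list nat -> Prop :=
| evs_nil : forall v, revals [] v []
| evs_cons : forall g gs v w ws,
    reval g v w -> revals gs v ws -> revals (g :: gs) v (w :: ws).

Definition cpair (x y : nat) : nat := (x + y) * (x + y + 1) / 2 + y.

Fixpoint code (A : fo) : nat :=
  match A with
  | FEq x y => cpair 0 (cpair x y)
  | FRel x y => cpair 1 (cpair x y)
  | FBot => cpair 2 0
  | FImp B C => cpair 3 (cpair (code B) (code C))
  | FAll x B => cpair 4 (cpair x (code B))
  end.

Definition fo_decidable (P : fo -> Prop) : Prop :=
  exists f : rf, forall A, sentence A ->
    (P A -> reval f [code A] 1) /\ (~ P A -> reval f [code A] 0).

(* Main.v *)
Require Import Defs.
From Stdlib Require Import Arith List Lia Classical ProofIrrelevance Setoid Morphisms.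
Import ListNotations.

Lemma P0 x v : reval (RProj 0) (x :: v) x.
Proof. apply (ev_proj 0 (x::v)); simpl; lia. Qed.
Lemma P1 x y v : reval (RProj 1) (x :: y :: v) y.
Proof. apply (ev_proj 1 (x::y::v)); simpl; lia. Qed.
Lemma P2 x y z v : reval (RProj 2) (x :: y :: z :: v) z.
Proof. apply (ev_proj 2 (x::y::z::v)); simpl; lia. Qed.
Lemma Pi i v : i < length v -> reval (RProj i) v (nth i v 0).
Proof. intros; constructor; auto. Qed.

Fixpoint constrf (n : nat) : rf :=
  match n with 0 => RZero | S n => RComp RSucc [constrf n] end.
Lemma constrf_ok n v : reval (constrf n) v n.
Proof.
  induction n; simpl. constructor.
  econstructor. constructor. exact IHn. constructor. constructor.
Qed.

Lemma prim0_ok f g (F : nat) (G : nat -> nat -> nat) (h : nat -> nat) :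
  reval f [] F -> (forall n a, reval g [n; a] (G n a)) ->
  h 0 = F -> (forall n, h (S n) = G n (h n)) ->
  forall n, reval (RPrim f g) [n] (h n).
Proof.
  intros Hf Hg H0 HS n; induction n.
  - rewrite H0; constructor; auto.
  - rewrite HS; econstructor; eauto.
Qed.

Lemma prim1_ok f g (F : nat -> nat) (G : nat -> nat -> nat -> nat) (h : nat -> nat -> nat) :
  (forall y, reval f [y] (F y)) -> (forall n a y, reval g [n; a; y] (G n a y)) ->
  (forall y, h 0 y = F y) -> (forall n y, h (S n) y = G n (h n y) y) ->
  forall n y, reval (RPrim f g) [n; y] (h n y).
Proof.
  intros Hf Hg H0 HS n y; induction n.
  - rewrite H0; constructor; auto.
  - rewrite HS; econstructor; eauto.
Qed.

Inductive ex : Type :=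
| EV (i : nat)
| EC (n : nat)
| E1 (t : rf) (f : nat -> nat) (a : ex)
| E2 (t : rf) (f : nat -> nat -> nat) (a b : ex)
| E3 (t : rf) (f : nat -> nat -> nat -> nat) (a b c : ex).

Fixpoint eval (v : list nat) (e : ex) : nat :=
  match e with
  | EV i => nth i v 0
  | EC n => n
  | E1 _ f a => f (eval v a)
  | E2 _ f a b => f (eval v a) (eval v b)
  | E3 _ f a b c => f (eval v a) (eval v b) (eval v c)
  end.

Fixpoint compile (e : ex) : rf :=
  match e with
  | EV i => RProj i
  | EC n => constrf n
  | E1 t _ a => RComp t [compile a]
  | E2 t _ a b => RComp t [compile a; compile b]
  | E3 t _ a b c => RComp t [compile a; compile b; compile c]
  end.

Fixpoint wf (k : nat) (e : ex) : Prop :=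
  match e with
  | EV i => i < k
  | EC _ => True
  | E1 t f a => (forall x, reval t [x] (f x)) /\ wf k a
  | E2 t f a b => (forall x y, reval t [x; y] (f x y)) /\ wf k a /\ wf k b
  | E3 t f a b c => (forall x y z, reval t [x; y; z] (f x y z)) /\ wf k a /\ wf k b /\ wf k c
  end.

Lemma compile_ok e v : wf (length v) e -> reval (compile e) v (eval v e).
Proof.
  induction e; simpl; intros W.
  - constructor; auto.
  - apply constrf_ok.
  - destruct W. econstructor. econstructor. eauto. constructor. auto.
  - destruct W as (?&?&?). econstructor. econstructor. eauto. econstructor. eauto. constructor. auto.
  - destruct W as (?&?&?&?). econstructor. econstructor. eauto. econstructor. eauto.
    econstructor. eauto. constructor. auto.
Qed.

Definition add_rf := RPrim (RProj 0) (RComp RSucc [RProj 1]).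
Lemma add_ok x y : reval add_rf [x; y] (x + y).
Proof.
  apply (prim1_ok _ _ (fun y => y) (fun n a y => S a) (fun x y => x + y)); auto.
  - intros; apply P0.
  - intros. econstructor. constructor. apply P1. constructor. constructor.
Qed.

Definition pred_rf := RPrim RZero (RProj 0).
Lemma pred_ok x : reval pred_rf [x] (pred x).
Proof.
  apply (prim0_ok _ _ 0 (fun n a => n)); auto. constructor. intros; apply P0.
Qed.

Definition subr_rf := RPrim (RProj 0) (RComp pred_rf [RProj 1]).
Lemma subr_ok y x : reval subr_rf [y; x] (x - y).
Proof.
  apply (prim1_ok _ _ (fun x => x) (fun n a y => pred a) (fun y x => x - y)); auto.
  - intros; apply P0.
  - intros. econstructor. constructor. apply P1. constructor. apply pred_ok.
  - intros; lia.
  - intros; lia.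
Qed.

Definition sub_rf := RComp subr_rf [RProj 1; RProj 0].
Lemma sub_ok x y : reval sub_rf [x; y] (x - y).
Proof. econstructor. constructor. apply P1. constructor. apply P0. constructor. apply subr_ok. Qed.

Definition cond (b x y : nat) := match b with 0 => y | S _ => x end.
Definition cond_rf := RPrim (RProj 1) (RProj 2).
Lemma cond_ok b x y : reval cond_rf [b; x; y] (cond b x y).
Proof.
  destruct b; simpl.
  - constructor. apply P1.
  - assert (forall n, reval cond_rf [n; x; y] (cond n x y)).
    { induction n. constructor. apply P1. econstructor. eauto. apply P2. }
    exact (H (S b)).
Qed.

Fixpoint T (s : nat) : nat := match s with 0 => 0 | S s => T s + S s end.
Definition T_rf := RPrim RZero (RComp add_rf [RProj 1; RComp RSucc [RProj 0]]).
Lemma T_ok s : reval T_rf [s] (T s).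
Proof.
  apply (prim0_ok _ _ 0 (fun n a => a + S n)); auto. constructor.
  intros. econstructor. constructor. apply P1. constructor. econstructor. constructor. apply P0.
  constructor. constructor. constructor. apply add_ok.
Qed.

Definition eadd a b := E2 add_rf Nat.add a b.
Definition esub a b := E2 sub_rf Nat.sub a b.
Definition econd a b c := E3 cond_rf cond a b c.
Definition esucc a := E1 RSucc S a.
Definition eT a := E1 T_rf T a.
Definition iszero z := cond z 0 1.
Definition eiszero a := econd a (EC 0) (EC 1).
Definition eqn x y := iszero ((x - y) + (y - x)).
Definition eeqn a b := eiszero (eadd (esub a b) (esub b a)).
Definition len x y := iszero (x - y).
Definition elen a b := eiszero (esub a b).

Lemma succ_ok x : reval RSucc [x] (S x).
Proof. constructor. Qed.

Lemma eqn_spec x y : eqn x y = if x =? y then 1 else 0.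
Proof.
  unfold eqn, iszero, cond. destruct (Nat.eqb_spec x y).
  - subst. rewrite Nat.sub_diag. reflexivity.
  - destruct (x - y + (y - x)) eqn:E; [lia|reflexivity].
Qed.
Lemma len_spec x y : len x y = if x <=? y then 1 else 0.
Proof.
  unfold len, iszero, cond. destruct (Nat.leb_spec x y).
  - replace (x - y) with 0 by lia. reflexivity.
  - destruct (x - y) eqn:E; [lia|reflexivity].
Qed.

Ltac wfauto := simpl; repeat split; intros;
  first [ apply add_ok | apply sub_ok | apply cond_ok | apply succ_ok | apply T_ok | lia | idtac ].

Fixpoint diag (n : nat) : nat :=
  match n with 0 => 0 | S n => cond (len (T (S (diag n))) (S n)) (S (diag n)) (diag n) end.
Definition diagstep := econd (elen (eT (esucc (EV 1))) (esucc (EV 0))) (esucc (EV 1)) (EV 1).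
Definition diag_rf := RPrim RZero (compile diagstep).
Lemma diag_ok n : reval diag_rf [n] (diag n).
Proof.
  apply (prim0_ok _ _ 0 (fun n a => eval [n; a] diagstep)); auto. constructor.
  intros. apply compile_ok. wfauto.
Qed.

Definition sndu n := n - T (diag n).
Definition fstu n := diag n - sndu n.
Definition ediag a := E1 diag_rf diag a.
Definition snd_e := esub (EV 0) (eT (ediag (EV 0))).
Definition snd_rf := compile snd_e.
Lemma snd_ok n : reval snd_rf [n] (sndu n).
Proof. apply (compile_ok snd_e [n]). wfauto. apply diag_ok. Qed.
Definition fst_e := esub (ediag (EV 0)) (E1 snd_rf sndu (EV 0)).
Definition fst_rf := compile fst_e.
Lemma fst_ok n : reval fst_rf [n] (fstu n).
Proof. apply (compile_ok fst_e [n]). wfauto. apply diag_ok. apply snd_ok. Qed.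

Definition cpT x y := T (x + y) + y.
Definition cp_e := eadd (eT (eadd (EV 0) (EV 1))) (EV 1).
Definition cp_rf := compile cp_e.
Lemma cp_ok x y : reval cp_rf [x; y] (cpT x y).
Proof. apply (compile_ok cp_e [x; y]). wfauto. Qed.

Lemma T2 s : 2 * T s = s * (s + 1).
Proof. induction s; simpl T; nia. Qed.

Lemma cpair_cpT x y : cpair x y = cpT x y.
Proof.
  unfold cpair, cpT. f_equal. rewrite <- T2.
  rewrite Nat.mul_comm. apply Nat.div_mul. lia.
Qed.

Lemma T_ge s : s <= T s.
Proof. induction s; simpl; lia. Qed.
Lemma T_mono a b : a <= b -> T a <= T b.
Proof. induction 1; simpl; lia. Qed.

Lemma diag_spec n : T (diag n) <= n < T (S (diag n)).
Proof.
  induction n; simpl. lia.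
  rewrite len_spec. destruct (Nat.leb_spec (T (diag n) + S (diag n)) (S n)); simpl in *; lia.
Qed.

Lemma diag_unique n s : T s <= n < T (S s) -> diag n = s.
Proof.
  intros H. pose proof (diag_spec n).
  destruct (Nat.lt_trichotomy (diag n) s) as [Hl|[Hl|Hl]]; auto.
  - assert (T (S (diag n)) <= T s) by (apply T_mono; lia). lia.
  - assert (T (S s) <= T (diag n)) by (apply T_mono; lia). lia.
Qed.

Lemma diag_cp x y : diag (cpT x y) = x + y.
Proof. apply diag_unique. unfold cpT. simpl. lia. Qed.

Lemma snd_cp x y : sndu (cpT x y) = y.
Proof. unfold sndu. rewrite diag_cp. unfold cpT. lia. Qed.
Lemma fst_cp x y : fstu (cpT x y) = x.
Proof. unfold fstu. rewrite snd_cp, diag_cp. lia. Qed.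

Lemma fst_cpair x y : fstu (cpair x y) = x.
Proof. rewrite cpair_cpT; apply fst_cp. Qed.
Lemma snd_cpair x y : sndu (cpair x y) = y.
Proof. rewrite cpair_cpT; apply snd_cp. Qed.

Lemma cpair_ge x y : x + y <= cpair x y.
Proof. rewrite cpair_cpT. unfold cpT. pose proof (T_ge (x+y)). lia. Qed.

Definition FNot p := FImp p FBot.
Definition FOr p q := FImp (FNot p) q.
Definition FAnd p q := FNot (FImp p (FNot q)).
Definition FEx x p := FNot (FAll x (FNot p)).
Definition Comp u v a b :=
  FOr (FEq u v) (FEx a (FEx b (FAnd (FRel u a) (FAnd (FRel v b) (FRel a b))))).
Definition theta g x := FNot (Comp g x (S g) (S (S g))).

Fixpoint rel (g : nat) (A : fo) : fo :=
  match A with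
  | FImp B C => FImp (rel g B) (rel g C)
  | FAll x B => FAll x (FImp (theta g x) (rel g B))
  | _ => A
  end.

Definition Ante g := FEx (S (S (S g))) (FNot (Comp g (S (S (S g))) (S g) (S (S g)))).
Definition Aprime A :=
  FAll (S (code A)) (FImp (Ante (S (code A))) (rel (S (code A)) A)).

Inductive foX : Type :=
| XEq : ex -> ex -> foX
| XRel : ex -> ex -> foX
| XBot : foX
| XImp : foX -> foX -> foX
| XAll : ex -> foX -> foX.

Fixpoint inst (v : list nat) (p : foX) : fo :=
  match p with
  | XEq a b => FEq (eval v a) (eval v b)
  | XRel a b => FRel (eval v a) (eval v b)
  | XBot => FBot
  | XImp p q => FImp (inst v p) (inst v q)
  | XAll a p => FAll (eval v a) (inst v p)
  end.

Definition ecp a b := E2 cp_rf cpT a b.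
Fixpoint codeX (p : foX) : ex :=
  match p with
  | XEq a b => ecp (EC 0) (ecp a b)
  | XRel a b => ecp (EC 1) (ecp a b)
  | XBot => ecp (EC 2) (EC 0)
  | XImp p q => ecp (EC 3) (ecp (codeX p) (codeX q))
  | XAll a p => ecp (EC 4) (ecp a (codeX p))
  end.

Fixpoint wfX k (p : foX) : Prop :=
  match p with
  | XEq a b | XRel a b => wf k a /\ wf k b
  | XBot => True
  | XImp p q => wfX k p /\ wfX k q
  | XAll a p => wf k a /\ wfX k p
  end.

Lemma codeX_eval v p : eval v (codeX p) = code (inst v p).
Proof.
  induction p; simpl; rewrite ?cpair_cpT; unfold cpT; simpl; try rewrite IHp1, IHp2; try rewrite IHp;
  reflexivity.
Qed.

Lemma codeX_wf k p : wfX k p -> wf k (codeX p).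
Proof.
  induction p; simpl; intros; repeat split; intros; try apply cp_ok; tauto.
Qed.

Definition XNot p := XImp p XBot.
Definition XOr p q := XImp (XNot p) q.
Definition XAnd p q := XNot (XImp p (XNot q)).
Definition XEx x p := XNot (XAll x (XNot p)).
Definition XComp u v a b :=
  XOr (XEq u v) (XEx a (XEx b (XAnd (XRel u a) (XAnd (XRel v b) (XRel a b))))).
Definition thetaX g x := XNot (XComp g x (esucc g) (esucc (esucc g))).
Definition AnteX g := XEx (esucc (esucc (esucc g)))
  (XNot (XComp g (esucc (esucc (esucc g))) (esucc g) (esucc (esucc g)))).

Lemma thetaX_inst v g x : inst v (thetaX g x) = theta (eval v g) (eval v x).
Proof. reflexivity. Qed.
Lemma AnteX_inst v g : inst v (AnteX g) = Ante (eval v g).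
Proof. reflexivity. Qed.

Fixpoint iterS (k h : nat) : nat := match k with 0 => h | S k => sndu (iterS k h) end.
Definition iter_rf := RPrim (RProj 0) (compile (E1 snd_rf sndu (EV 1))).
Lemma iter_ok k h : reval iter_rf [k; h] (iterS k h).
Proof.
  apply (prim1_ok _ _ (fun h => h) (fun n a h => sndu a)); auto.
  - intros; apply P0.
  - intros. apply (compile_ok (E1 snd_rf sndu (EV 1)) [n; a; y]). simpl. split; [apply snd_ok|lia].
Qed.
Lemma iterS_S k h : iterS (S k) h = iterS k (sndu h).
Proof. induction k; simpl in *; congruence. Qed.

Definition look h n m := fstu (iterS (n - 1 - m) h).

Definition efst a := E1 fst_rf fstu a.
Definition esnd a := E1 snd_rf sndu a.
Definition lookE m := efst (E2 iter_rf iterS (esub (esub (EV 1) (EC 1)) m) (EV 2)).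
Definition tE := efst (EV 1).
Definition bE := esnd (EV 1).
Definition b1E := efst bE.
Definition b2E := esnd bE.
Definition P3E := ecp (EC 3) (ecp (lookE b1E) (lookE b2E)).
Definition P4E := ecp (EC 4) (ecp b1E (ecp (EC 3) (ecp (codeX (thetaX (EV 0) b1E)) (lookE b2E)))).
Definition RE := econd (eeqn tE (EC 3)) P3E (econd (eeqn tE (EC 4)) P4E (EV 1)).

Lemma RE_wf : wf 3 RE.
Proof.
  unfold RE, P3E, P4E, lookE, tE, bE, b1E, b2E, efst, esnd, eeqn, eiszero, econd, eadd, esub, ecp.
  simpl. repeat split; intros;
  first [ apply add_ok | apply sub_ok | apply cond_ok | apply succ_ok | apply T_ok | apply fst_ok
        | apply snd_ok | apply cp_ok | apply iter_ok | lia | idtac ].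
Qed.

Definition Rf g n h := eval [g; n; h] RE.
Definition R_rf := compile RE.
Lemma R_ok g n h : reval R_rf [g; n; h] (Rf g n h).
Proof. apply compile_ok. apply RE_wf. Qed.

Fixpoint hist (g n : nat) : nat :=
  match n with 0 => 0 | S n => cpT (Rf g n (hist g n)) (hist g n) end.
Definition histstep := ecp (E3 R_rf Rf (EV 2) (EV 0) (EV 1)) (EV 1).
Definition hist_rf := RPrim RZero (compile histstep).
Lemma hist_ok n g : reval hist_rf [n; g] (hist g n).
Proof.
  apply (prim1_ok _ _ (fun _ => 0) (fun n a g => cpT (Rf g n a) a) (fun n g => hist g n)); auto.
  - intros; constructor.
  - intros. apply (compile_ok histstep [n0; a; y]). simpl. repeat split; intros; try lia.
    apply cp_ok. apply R_ok.
Qed.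

Definition relc g c := fstu (hist g (S c)).
Definition relcE := efst (E2 hist_rf (fun n g => hist g n) (esucc (EV 1)) (EV 0)).
Definition relc_rf := compile relcE.
Lemma relc_ok g c : reval relc_rf [g; c] (relc g c).
Proof.
  apply (compile_ok relcE [g; c]). simpl. repeat split; intros; try lia.
  apply fst_ok. apply hist_ok. apply succ_ok.
Qed.

Lemma relc_eq g m : relc g m = Rf g m (hist g m).
Proof. unfold relc. simpl. apply fst_cp. Qed.

Lemma look_hist g n m : m < n -> look (hist g n) n m = relc g m.
Proof.
  induction n; intros Hm. lia.
  unfold look. simpl hist.
  destruct (Nat.eq_dec m n).
  - subst. replace (S n - 1 - n) with 0 by lia. simpl. rewrite fst_cp, relc_eq. reflexivity.
  - replace (S n - 1 - m) with (S (n - 1 - m)) by lia. rewrite iterS_S, snd_cp.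
    apply IHn. lia.
Qed.

Lemma code_lt3 a b : a < cpair 3 (cpair a b) /\ b < cpair 3 (cpair a b).
Proof. pose proof (cpair_ge 3 (cpair a b)); pose proof (cpair_ge a b); lia. Qed.
Lemma code_lt4 a b : a < cpair 4 (cpair a b) /\ b < cpair 4 (cpair a b).
Proof. pose proof (cpair_ge 4 (cpair a b)); pose proof (cpair_ge a b); lia. Qed.

Lemma look_hist' g n m : m < n -> fstu (iterS (n - 1 - m) (hist g n)) = relc g m.
Proof. apply look_hist. Qed.

Lemma relc_code g A : relc g (code A) = code (rel g A).
Proof.
  induction A; rewrite relc_eq; unfold Rf, RE; repeat unfold econd, eeqn, eiszero, eadd, esub, efst, tE.
  - cbn [eval code rel nth]. rewrite !cpair_cpT, fst_cp. reflexivity.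
  - cbn [eval code rel nth]. rewrite !cpair_cpT, fst_cp. reflexivity.
  - cbn [eval code rel nth]. rewrite !cpair_cpT, fst_cp. reflexivity.
  - pose proof (code_lt3 (code A1) (code A2)) as [L1 L2]. rewrite !cpair_cpT in L1, L2.
    cbn [eval code rel]. unfold tE. cbn [eval nth]. rewrite !cpair_cpT. rewrite fst_cp. cbn [cond Nat.sub Nat.add].
    repeat unfold P3E, ecp, lookE, efst, b1E, b2E, bE, esnd, esub. cbn [eval nth].
    rewrite !snd_cp, !fst_cp, !look_hist' by auto. rewrite IHA1, IHA2. reflexivity.
  - pose proof (code_lt4 n (code A)) as [L1 L2]. rewrite !cpair_cpT in L1, L2.
    cbn [eval code rel]. unfold tE. cbn [eval nth]. rewrite !cpair_cpT. rewrite fst_cp. cbn [cond Nat.sub Nat.add].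
    repeat unfold P4E, ecp, lookE, efst, b1E, b2E, bE, esnd, esub. cbn [eval nth].
    rewrite codeX_eval, thetaX_inst. cbn [eval nth].
    rewrite !snd_cp, !fst_cp, !look_hist' by auto. rewrite IHA. simpl code. rewrite ?cpair_cpT. reflexivity.
Qed.

Definition gE := esucc (EV 0).
Definition topE := ecp (EC 4) (ecp gE (ecp (EC 3) (ecp (codeX (AnteX gE)) (E2 relc_rf relc gE (EV 0))))).
Definition top_rf := compile topE.
Lemma top_ok A : reval top_rf [code A] (code (Aprime A)).
Proof.
  replace (code (Aprime A)) with (eval [code A] topE).
  - apply compile_ok. unfold topE, ecp, gE, esucc. simpl. repeat split; intros;
    first [ apply succ_ok | apply cp_ok | apply relc_ok | lia | idtac ].
  - unfold topE, ecp. cbn [eval]. rewrite codeX_eval, AnteX_inst.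
    unfold gE, esucc; cbn [eval nth]. rewrite relc_code.
    unfold Aprime. cbn [code]. rewrite !cpair_cpT. reflexivity.
Qed.

Definition CompS (F : frame) (x y : fW F) : Prop :=
  x = y \/ exists p q, fR F x p /\ fR F y q /\ fR F p q.

Lemma for_sat F rho p q : fsat F rho (FOr p q) <-> fsat F rho p \/ fsat F rho q.
Proof. simpl. split; intros. destruct (classic (fsat F rho p)); auto. destruct H; tauto. Qed.
Lemma fand_sat F rho p q : fsat F rho (FAnd p q) <-> fsat F rho p /\ fsat F rho q.
Proof. simpl. split; intros. destruct (classic (fsat F rho p)); destruct (classic (fsat F rho q)); tauto. tauto. Qed.
Lemma fex_sat F rho x p : fsat F rho (FEx x p) <->
  exists d, fsat F (fun y => if Nat.eqb y x then d else rho y) p.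
Proof.
  simpl. split; intros.
  - apply NNPP; intro Hn; apply H; intros d Hd; apply Hn; eauto.
  - destruct H as [d Hd]; eauto.
Qed.

Lemma fnot_sat F rho p : fsat F rho (FNot p) <-> ~ fsat F rho p.
Proof. reflexivity. Qed.

Lemma Comp_sat F rho u v a b : a <> u -> a <> v -> b <> u -> b <> v -> a <> b ->
  (fsat F rho (Comp u v a b) <-> CompS F (rho u) (rho v)).
Proof.
  intros H1 H2 H3 H4 H5. unfold Comp. rewrite for_sat, fex_sat. unfold CompS. simpl fsat at 1.
  assert (E1 : (u =? b) = false) by (apply Nat.eqb_neq; auto).
  assert (E2 : (u =? a) = false) by (apply Nat.eqb_neq; auto).
  assert (E3 : (v =? b) = false) by (apply Nat.eqb_neq; auto).
  assert (E4 : (v =? a) = false) by (apply Nat.eqb_neq; auto).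
  assert (E5 : (a =? b) = false) by (apply Nat.eqb_neq; auto).
  split; intros [H|H]; auto; right.
  - destruct H as [p Hp]. rewrite fex_sat in Hp. destruct Hp as [q Hq].
    rewrite !fand_sat in Hq. simpl in Hq.
    rewrite E1, E2, E3, E4, E5, !Nat.eqb_refl in Hq. eauto.
  - destruct H as (p & q & Hp & Hq & Hpq). exists p. rewrite fex_sat. exists q.
    rewrite !fand_sat. simpl. rewrite E1, E2, E3, E4, E5, !Nat.eqb_refl. auto.
Qed.

Lemma theta_sat F rho g x : x < g ->
  (fsat F rho (theta g x) <-> ~ CompS F (rho g) (rho x)).
Proof.
  intros Hx. unfold theta. rewrite fnot_sat, Comp_sat by lia. tauto.
Qed.

Lemma Ante_sat F rho g :
  fsat F rho (Ante g) <-> exists e, ~ CompS F (rho g) e.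
Proof.
  unfold Ante. rewrite fex_sat. setoid_rewrite fnot_sat.
  split; intros [e He]; exists e; rewrite Comp_sat in * by lia;
  rewrite Nat.eqb_refl in *; replace (g =? S (S (S g))) with false in * by (symmetry; apply Nat.eqb_neq; lia);
  auto.
Qed.

Definition emb (G F : frame) (e : fW G -> fW F) : Prop :=
  (forall a b, fR G a b <-> fR F (e a) (e b)) /\
  (forall a y, fR F (e a) y -> exists b, y = e b).

Lemma msat_emb G F e : emb G F e -> forall phi V w,
  msat G (fun n b => V n (e b)) w phi <-> msat F V (e w) phi.
Proof.
  intros [HR HC] phi. induction phi; intros V w; simpl; try tauto.
  - rewrite IHphi. tauto.
  - rewrite IHphi1, IHphi2. tauto.
  - split; intros H.
    + intros y Hy. destruct (HC _ _ Hy) as [b ->]. apply IHphi. apply H. apply HR; auto.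
    + intros u Hu. apply IHphi. apply H. apply HR; auto.
Qed.

Lemma msat_ext F phi : forall V V', (forall n x, V n x <-> V' n x) ->
  forall w, msat F V w phi <-> msat F V' w phi.
Proof.
  induction phi; intros V V' HV w; simpl; try tauto; try apply HV.
  - rewrite (IHphi V V' HV). tauto.
  - rewrite (IHphi1 V V' HV), (IHphi2 V V' HV). tauto.
  - split; intros H u Hu; [apply (IHphi V V' HV) | apply (IHphi V V' HV)]; auto.
Qed.

Lemma sub_valid G F e phi : emb G F e -> (forall a b, e a = e b -> a = b) ->
  mvalid F phi -> mvalid G phi.
Proof.
  intros He Hi Hv V w.
  set (V' := fun n y => exists b, y = e b /\ V n b).
  apply (msat_ext G phi (fun n b => V' n (e b)) V).
  - intros n x. unfold V'. split.
    + intros [b [Hb Hv']]. apply Hi in Hb. subst; auto.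
    + intros; eauto.
  - apply (msat_emb G F e He). apply Hv.
Qed.

Lemma cover F phi :
  (forall y : fW F, exists (G : frame) (e : fW G -> fW F) (w : fW G),
      emb G F e /\ e w = y /\ mvalid G phi) -> mvalid F phi.
Proof.
  intros H V y. destruct (H y) as (G & e & w & He & <- & Hv).
  apply (msat_emb G F e He). apply Hv.
Qed.

Definition eucl (F : frame) := forall x y z, fR F x y -> fR F x z -> fR F y z.

Lemma Fr_eucl L F : euclidean_logic L -> Fr L F -> eucl F.
Proof.
  intros (_ & _ & H5) HF x y z Hxy Hxz.
  specialize (HF _ (H5 (MVar 0))). specialize (HF (fun _ w => w = z) x).
  simpl in HF. destruct HF as [HF|HF].
  - exfalso. apply HF. intro Hn. apply (Hn z Hxz). reflexivity.
  - specialize (HF y Hxy). apply NNPP. intro Hn. apply HF. intros u Hu Hu'. subst. auto.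
Qed.

Section CompFacts.
Variable F : frame.
Hypothesis E : eucl F.

Lemma refl_of x y : fR F x y -> fR F y y.
Proof. intros; eapply E; eauto. Qed.

Lemma CompS_refl x : CompS F x x.
Proof. left; auto. Qed.

Lemma CompS_sym x y : CompS F x y -> CompS F y x.
Proof.
  intros [->|(p&q&Hp&Hq&Hpq)]. left; auto.
  right. exists q, p. repeat split; auto.
  assert (fR F p p) by (eapply refl_of; eauto). eapply E; eauto.
Qed.

Lemma CompS_trans x y z : CompS F x y -> CompS F y z -> CompS F x z.
Proof.
  intros [->|(a&b&Ha&Hb&Hab)]; auto.
  intros [<-|(c&d&Hc&Hd&Hcd)]. right; eauto.
  right. exists a, d. repeat split; auto.
  assert (Haa : fR F a a) by (eapply refl_of; eauto).
  assert (Hbc : fR F b c) by (eapply E; eauto).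
  assert (Hba : fR F b a) by (eapply E; eauto).
  assert (Hac : fR F a c) by (eapply E; eauto).
  assert (Hca : fR F c a) by (eapply E; eauto).
  eapply E; eauto.
Qed.

Lemma CompS_succ x y : fR F x y -> CompS F x y.
Proof.
  intros H. right. exists y, y. assert (fR F y y) by (eapply refl_of; eauto). auto.
Qed.

Lemma CompS_fwd x y z : CompS F x y -> fR F y z -> CompS F x z.
Proof. intros H1 H2. eapply CompS_trans; eauto. apply CompS_succ; auto. Qed.

Lemma CompS_back x y z : CompS F x z -> fR F y z -> CompS F x y.
Proof.
  intros H1 H2. eapply CompS_trans; eauto. apply CompS_sym. apply CompS_succ; auto.
Qed.
End CompFacts.

Definition subF (F : frame) (P : fW F -> Prop) (w : fW F) (Hw : P w) : frame :=
  {| fW := {y | P y}; fR := fun a b => fR F (proj1_sig a) (proj1_sig b);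
     fW_inhabited := inhabits (exist P w Hw) |}.

Lemma subF_emb F P w Hw : (forall x y, P x -> fR F x y -> P y) ->
  emb (subF F P w Hw) F (@proj1_sig _ P).
Proof.
  intros HC. split.
  - intros; simpl; tauto.
  - intros [a Ha] y Hy. simpl in Hy. exists (exist P y (HC _ _ Ha Hy)). reflexivity.
Qed.

Lemma sig_inj (X : Type) (P : X -> Prop) (a b : {x | P x}) : proj1_sig a = proj1_sig b -> a = b.
Proof.
  destruct a as [a pa], b as [b pb]; simpl; intros ->. f_equal. apply proof_irrelevance.
Qed.

Lemma subF_Fr L F P w Hw : Fr L F -> (forall x y, P x -> fR F x y -> P y) ->
  Fr L (subF F P w Hw).
Proof.
  intros HF HC a Ha. eapply sub_valid. apply subF_emb; auto.
  intros; apply sig_inj; auto. apply HF; auto.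
Qed.

Definition sumR (F1 F2 : frame) (a b : fW F1 + fW F2) : Prop :=
  match a, b with
  | inl x, inl y => fR F1 x y
  | inr x, inr y => fR F2 x y
  | _, _ => False
  end.

Definition sumF (F1 F2 : frame) : frame :=
  {| fW := (fW F1 + fW F2)%type; fR := sumR F1 F2;
     fW_inhabited := match fW_inhabited F1 with inhabits x => inhabits (inl x) end |}.

Lemma sumF_Fr L F1 F2 : Fr L F1 -> Fr L F2 -> Fr L (sumF F1 F2).
Proof.
  intros H1 H2 a Ha. apply cover. intros [y|y].
  - exists F1, inl, y. repeat split; auto.
    + intros c [z|z]; simpl; intros H; [eauto|contradiction].
  - exists F2, inr, y. repeat split; auto.
    + intros c [z|z]; simpl; intros H; [contradiction|eauto].
Qed.

Fixpoint vbound (g : nat) (A : fo) : Prop :=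
  match A with
  | FEq x y | FRel x y => x < g /\ y < g
  | FBot => True
  | FImp B C => vbound g B /\ vbound g C
  | FAll x B => x < g /\ vbound g B
  end.

Lemma vbound_mono A : forall g g', vbound g A -> g <= g' -> vbound g' A.
Proof. induction A; simpl; intros; intuition (eauto; lia). Qed.

Lemma vbound_code A : vbound (S (code A)) A.
Proof.
  induction A; simpl code; simpl.
  - pose proof (cpair_ge 0 (cpair n n0)); pose proof (cpair_ge n n0); lia.
  - pose proof (cpair_ge 1 (cpair n n0)); pose proof (cpair_ge n n0); lia.
  - auto.
  - pose proof (cpair_ge 3 (cpair (code A1) (code A2))); pose proof (cpair_ge (code A1) (code A2)).
    split; eapply vbound_mono; eauto; lia.
  - pose proof (cpair_ge 4 (cpair n (code A))); pose proof (cpair_ge n (code A)).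
    split. lia. eapply vbound_mono; eauto; lia.
Qed.

Lemma rel_ok H g0 w (Hw : ~ CompS H g0 w) : forall A g, vbound g A ->
  forall rho sigma, rho g = g0 ->
  (forall z, In z (fv A) -> rho z = proj1_sig (sigma z)) ->
  (fsat H rho (rel g A) <-> fsat (subF H (fun y => ~ CompS H g0 y) w Hw) sigma A).
Proof.
  induction A; intros g Hb rho sigma Hg Hz; cbn [rel fsat]; simpl fv in Hz.
  - rewrite (Hz n), (Hz n0) by (simpl; auto). split; [apply sig_inj|intros ->; auto].
  - rewrite (Hz n), (Hz n0) by (simpl; auto). tauto.
  - tauto.
  - simpl in Hb. destruct Hb.
    rewrite (IHA1 g H0 rho sigma Hg), (IHA2 g H1 rho sigma Hg). tauto.
    all: intros; apply Hz; apply in_or_app; auto.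
  - simpl in Hb. destruct Hb as [Hx Hb].
    assert (Hgx : (g =? n) = false) by (apply Nat.eqb_neq; lia).
    split.
    + intros H1 s. destruct s as [d Hd].
      specialize (H1 d). rewrite theta_sat in H1 by lia.
      rewrite Hgx, Nat.eqb_refl in H1.
      rewrite <- (IHA g Hb (fun y => if y =? n then d else rho y)); [apply H1; rewrite Hg; exact Hd| rewrite Hgx; auto |].
      intros z Hz'. destruct (Nat.eqb_spec z n). subst; auto.
      apply Hz. apply filter_In. split; auto. apply Bool.negb_true_iff, Nat.eqb_neq; auto.
    + intros H1 d Hd. rewrite theta_sat in Hd by lia. rewrite Hgx, Nat.eqb_refl, Hg in Hd.
      specialize (H1 (exist _ d Hd)).
      rewrite (IHA g Hb _ (fun y => if y =? n then exist _ d Hd else sigma y)); [exact H1| rewrite Hgx; auto |].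
      intros z Hz'. destruct (Nat.eqb_spec z n). subst; auto.
      apply Hz. apply filter_In. split; auto. apply Bool.negb_true_iff, Nat.eqb_neq; auto.
Qed.

Lemma iso_fsat G K (h : fW G -> fW K) :
  (forall a b, h a = h b -> a = b) -> (forall k, exists a, k = h a) ->
  (forall a b, fR G a b <-> fR K (h a) (h b)) ->
  forall A rho sigma, (forall z, sigma z = h (rho z)) ->
  (fsat G rho A <-> fsat K sigma A).
Proof.
  intros Hi Hs HR A. induction A; intros rho sigma Hz; simpl; rewrite ?Hz.
  - split; [intros ->; auto | apply Hi].
  - apply HR.
  - tauto.
  - rewrite (IHA1 rho sigma Hz), (IHA2 rho sigma Hz); tauto.
  - split.
    + intros H1 k. destruct (Hs k) as [d ->]. rewrite <- (IHA (fun y => if y =? n then d else rho y)).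
      apply H1. intros z; destruct (z =? n); auto.
    + intros H1 d. rewrite (IHA _ (fun y => if y =? n then h d else sigma y)).
      apply H1. intros z; destruct (z =? n); auto.
Qed.

Ltac inv_in := repeat match goal with
  | H : In _ (_ ++ _) |- _ => apply in_app_or in H; destruct H
  | H : In _ (filter _ _) |- _ => apply filter_In in H; destruct H
  | H : In _ (_ :: _) |- _ => destruct H
  | H : In _ [] |- _ => destruct H
  end.

Lemma fv_Comp z u v a b : In z (fv (Comp u v a b)) -> z = u \/ z = v.
Proof.
  unfold Comp, FOr, FEx, FAnd, FNot. intros H; cbn [fv] in H. inv_in; subst; auto;
  rewrite ?Nat.eqb_refl in *; simpl in *; try discriminate.
Qed.

Lemma fv_theta z g x : In z (fv (theta g x)) -> z = g \/ z = x.
Proof. unfold theta, FNot. intros H; cbn [fv] in H. inv_in. eapply fv_Comp; eauto. Qed.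

Lemma fv_Ante z g : In z (fv (Ante g)) -> z = g.
Proof.
  unfold Ante, FEx, FNot. intros H; cbn [fv] in H. inv_in.
  apply fv_Comp in H. destruct H; subst; auto. rewrite Nat.eqb_refl in *; discriminate.
Qed.

Lemma fv_rel z g A : In z (fv (rel g A)) -> In z (fv A) \/ z = g.
Proof.
  induction A; cbn [rel fv]; intros H; auto.
  - inv_in. destruct (IHA1 H); auto. left; apply in_or_app; auto.
    destruct (IHA2 H); auto. left; apply in_or_app; auto.
  - inv_in.
    + apply fv_theta in H. destruct H; auto. subst. rewrite Nat.eqb_refl in *; discriminate.
    + destruct (IHA H); auto. left. apply filter_In; auto.
Qed.

Lemma Aprime_sentence A : sentence A -> sentence (Aprime A).
Proof.
  unfold sentence. intros HA.
  destruct (fv (Aprime A)) as [|z l] eqn:E; auto. exfalso.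
  assert (Hz : In z (fv (Aprime A))) by (rewrite E; left; auto).
  unfold Aprime in Hz. cbn [fv] in Hz. inv_in.
  - apply fv_Ante in H. subst. rewrite Nat.eqb_refl in *; discriminate.
  - apply fv_rel in H. rewrite HA in H. destruct H as [[]|]. subst. rewrite Nat.eqb_refl in *; discriminate.
Qed.

Lemma liftComp K P y (Hy : P y) (HC : forall x z, P x -> fR K x z -> P z) (d e : fW (subF K P y Hy)) :
  CompS K (proj1_sig d) (proj1_sig e) -> CompS (subF K P y Hy) d e.
Proof.
  intros [Heq|(p&q&Hp&Hq&Hpq)].
  - left. apply sig_inj; auto.
  - right. exists (exist P p (HC _ _ (proj2_sig d) Hp)), (exist P q (HC _ _ (proj2_sig e) Hq)).
    simpl. auto.
Qed.

Lemma cross F1 F2 a b : ~ CompS (sumF F1 F2) (inr a) (inl b).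
Proof.
  intros [Heq|(p&q&Hp&Hq&Hpq)]; [discriminate|]. destruct p, q; simpl in *; auto.
Qed.

Lemma comp_inr F1 F2 a b : CompS F2 a b -> CompS (sumF F1 F2) (inr a) (inr b).
Proof.
  intros [->|(p&q&Hp&Hq&Hpq)]. left; auto. right. exists (inr p), (inr q). simpl; auto.
Qed.

Section Main.
Variable L : mform -> Prop.
Hypothesis HL : euclidean_logic L.

Lemma dir1 A : sentence A -> Th (Fr L) A -> modally_definable_in (Fr L) (Aprime A).
Proof.
  intros HA [_ HTh]. exists (MNeg MBot). intros F HF. split; intros _.
  - intros rho. unfold Aprime. cbn [fsat]. intros d Ha.
    rewrite Ante_sat in Ha. destruct Ha as [e He]. cbv beta in He. rewrite Nat.eqb_refl in He.
    pose proof (Fr_eucl L F HL HF) as E.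
    assert (HC : forall x y, ~ CompS F d x -> fR F x y -> ~ CompS F d y).
    { intros x y Hx Hxy Hy. apply Hx. eapply CompS_back; eauto. }
    apply (proj2 (rel_ok F d e He A _ (vbound_code A) (fun y => if y =? S (code A) then d else rho y) (fun _ => exist _ e He)
                   ltac:(cbv beta; rewrite Nat.eqb_refl; reflexivity)
                   ltac:(rewrite HA; intros z [])) ).
    apply HTh. apply subF_Fr; auto.
  - intros V w; simpl; auto.
Qed.

Lemma dir2 A : sentence A -> modally_definable_in (Fr L) (Aprime A) -> Th (Fr L) A.
Proof.
  intros HA [psi Hpsi]. split; auto.
  assert (Step1 : forall K, Fr L K -> mvalid K psi).
  { intros K HK. pose proof (Fr_eucl L K HL HK) as E. apply cover. intros y.
    assert (HC : forall x z, CompS K y x -> fR K x z -> CompS K y z).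
    { intros; eapply CompS_fwd; eauto. }
    exists (subF K (CompS K y) y (CompS_refl K y)), (@proj1_sig _ _),
      (exist _ y (CompS_refl K y)).
    split; [apply subF_emb; auto|]. split; [reflexivity|].
    apply Hpsi. apply subF_Fr; auto.
    intros rho. unfold Aprime. cbn [fsat]. intros d Ha. exfalso.
    rewrite Ante_sat in Ha. destruct Ha as [e He]. cbv beta in He. rewrite Nat.eqb_refl in He.
    apply He. apply liftComp; auto.
    eapply CompS_trans; eauto. apply CompS_sym; auto. exact (proj2_sig d). exact (proj2_sig e). }
  intros G HG rho.
  pose proof (Fr_eucl L G HL HG) as E.
  set (w := rho 0).
  assert (HC : forall x z, CompS G w x -> fR G x z -> CompS G w z).
  { intros; eapply CompS_fwd; eauto. }
  set (T := subF G (CompS G w) w (CompS_refl G w)).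
  set (t0 := exist (CompS G w) w (CompS_refl G w) : fW T).
  set (H := sumF G T).
  assert (HH : Fr L H) by (apply sumF_Fr; auto; apply subF_Fr; auto).
  pose proof (proj1 (Hpsi H HH) (Step1 H HH) (fun _ => inl w)) as HA'.
  unfold Aprime in HA'. cbn [fsat] in HA'. specialize (HA' (inr t0)).
  assert (Hw : ~ CompS H (inr t0) (inl w)) by apply cross.
  assert (Hante : fsat H (fun y => if y =? S (code A) then inr t0 else inl w) (Ante (S (code A)))).
  { rewrite Ante_sat. exists (inl w). cbv beta. rewrite Nat.eqb_refl. exact Hw. }
  specialize (HA' Hante).
  set (h := fun x : fW G => exist (fun y => ~ CompS H (inr t0) y) (inl x) (cross G T t0 x)
             : fW (subF H (fun y => ~ CompS H (inr t0) y) (inl w) Hw)).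
  apply (rel_ok H (inr t0) (inl w) Hw A _ (vbound_code A) (fun y => if y =? S (code A) then inr t0 else inl w) (fun z => h (rho z))
           ltac:(cbv beta; rewrite Nat.eqb_refl; reflexivity)
           ltac:(rewrite HA; intros z [])) in HA'.
  apply (iso_fsat G _ h) with (rho := rho) in HA'; auto.
  - intros a b Hab. apply (f_equal (@proj1_sig _ _)) in Hab. simpl in Hab. congruence.
  - intros [[x|t] Hk].
    + exists x. apply sig_inj. reflexivity.
    + exfalso. apply Hk. apply comp_inr. apply liftComp; auto. exact (proj2_sig t).
  - intros a b. simpl. tauto.
Qed.
End Main.

Theorem lemma52 (L : mform -> Prop) (HL : euclidean_logic L) :
  ~ fo_decidable (Th (Fr L)) ->
  ~ fo_decidable (modally_definable_in (Fr L)).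
Proof.
  intros Hn [f Hf]. apply Hn. exists (RComp f [top_rf]).
  intros A HA. pose proof (Hf (Aprime A) (Aprime_sentence A HA)) as [H1 H0].
  split; intros H.
  - econstructor. constructor. apply top_ok. constructor. apply H1. apply dir1; auto.
  - econstructor. constructor. apply top_ok. constructor. apply H0. intro Hd. apply H. eapply dir2; eauto.
Qed.
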